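(* Let $\alpha\in(0,1)$. Consider the repeated game with action sets $\mathcal{A}$, $\mathcal{B}$ and vector payoff $m_{\mathrm{reg}}:\mathcal{A}\times\mathcal{B}\to\mathbb{R}\times\mathbb{R}^{\mathcal{A}}$, $$m_{\mathrm{reg}}(a,b)=\Big(\mathbf{1}_{b\le a},\ \big(\ell_\alpha(a,b)-\ell_\alpha(a',b)\big)_{a'\in\mathcal{A}}\Big),\qquad \ell_\alpha(a,b)=(\alpha-\mathbf{1}_{b\le a})(b-a).$$ Then the closed convex set $S_{\mathrm{reg}}=[0,\alpha]\times(-\infty,0]^{\mathcal{A}}$ is not approachable: there is no strategy of the learner guaranteeing, for every strategy of the opponent, $d\big(\frac1T\sum_{t=1}^T m_{\mathrm{reg}}(a_t,b_t),S_{\mathrm{reg}}\big)\to0$ almost surely.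
   Context: Fix $n\ge1$; $\mathcal{A}=\{k/(n+1):k=0,\dots,n+1\}$ (so $|\mathcal{A}|=n+2$), $\mathcal{B}=\{k/(n+1):k=1,\dots,n+1\}$. Repeated game: at each round $t$ the learner chooses a mixed action on $\mathcal{A}$ and the opponent a mixed action on $\mathcal{B}$, both as functions of the past, and $a_t$, $b_t$ are drawn independently from them given the past. $d$ denotes Euclidean point-to-set distance. *)

(* Defs.v *)
From HB Require Import structures.
From mathcomp Require Import all_boot all_order all_algebra.
From mathcomp Require Import all_classical all_reals all_analysis.
Set Implicit Arguments. Unset Strict Implicit. Unset Printing Implicit Defensive.
Import Order.TTheory GRing.Theory Num.Theory.
Import numFieldNormedType.Exports.
Local Open Scope classical_set_scope.
Local Open Scope ring_scope.

Section Game.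
Variables (R : realType) (n : nat).

Definition Aidx := 'I_(n.+2).
Definition Bidx := 'I_(n.+1).

Definition Aval (i : Aidx) : R := (i : nat)%:R / (n.+1)%:R.
Definition Bval (j : Bidx) : R := (j : nat).+1%:R / (n.+1)%:R.

(* Payoff space R x R^A, coordinates indexed by option Aidx:
   None = first coordinate, Some a' = coordinate a'. *)
Definition vec := option Aidx -> R.

Definition eucl_norm (x : vec) : R := Num.sqrt (\sum_(k : option Aidx) x k ^+ 2).

Definition dist (x : vec) (S : set vec) : R :=
  inf [set r | exists s, S s /\ r = eucl_norm (fun k => x k - s k)].

Definition ell (alpha a b : R) : R := (alpha - ((b <= a)%R)%:R) * (b - a).

Definition mreg (alpha : R) (i : Aidx) (j : Bidx) : vec :=
  fun k => match k with
           | None => ((Bval j <= Aval i)%R)%:R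
           | Some a' => ell alpha (Aval i) (Bval j) - ell alpha (Aval a') (Bval j)
           end.

Definition Sreg (alpha : R) : set vec :=
  [set x | 0 <= x None <= alpha /\ forall a' : Aidx, x (Some a') <= 0].

Definition is_mixed (X : finType) (p : X -> R) : Prop :=
  (forall x, 0 <= p x) /\ \sum_(x : X) p x = 1.

Definition history := seq (Aidx * Bidx).

Definition lstrategy := history -> Aidx -> R.
Definition ostrategy := history -> Bidx -> R.

Definition is_lstrategy (s : lstrategy) := forall h, is_mixed (s h).
Definition is_ostrategy (s : ostrategy) := forall h, is_mixed (s h).

Section Play.
Context {d : measure_display} {T : measurableType d}.

Definition hist (a : nat -> T -> Aidx) (b : nat -> T -> Bidx) (t : nat) (w : T)
  : history := [seq (a s w, b s w) | s <- iota 0 t].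

(* (P, a, b) realizes the play of strategies x (learner) and y (opponent):
   the actions are random variables, and given the past history h at round t,
   a_t and b_t are drawn independently from x h and y h. *)
Definition realizes (P : probability T R) (x : lstrategy) (y : ostrategy)
  (a : nat -> T -> Aidx) (b : nat -> T -> Bidx) : Prop :=
  (forall t i, measurable [set w | a t w = i]) /\
  (forall t j, measurable [set w | b t w = j]) /\
  (forall t (h : history) i j,
     P [set w | hist a b t w = h /\ a t w = i /\ b t w = j] =
     (P [set w | hist a b t w = h] * (x h i * y h j)%:E)%E).

(* average payoff over rounds 0..T (i.e. T+1 rounds) *)
Definition avg_payoff (m : Aidx -> Bidx -> vec)
  (a : nat -> T -> Aidx) (b : nat -> T -> Bidx) (N : nat) (w : T) : vec :=
  fun k => (N.+1)%:R^-1 * \sum_(t < N.+1) m (a t w) (b t w) k.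
End Play.

Definition approachable (m : Aidx -> Bidx -> vec) (S : set vec) : Prop :=
  exists x : lstrategy, is_lstrategy x /\
    forall y : ostrategy, is_ostrategy y ->
    forall (d : measure_display) (T : measurableType d) (P : probability T R)
           (a : nat -> T -> Aidx) (b : nat -> T -> Bidx),
      realizes P x y a b ->
      {ae P, forall w, (fun N => dist (avg_payoff m a b N w) S) @ \oo --> (0 : R)}.

End Game.

(* Main.v *)
Require Import Defs.
From HB Require Import structures.
From mathcomp Require Import all_boot all_order all_algebra.
From mathcomp Require Import all_classical all_reals all_analysis.
From mathcomp Require Import lra ring.
Import Order.TTheory GRing.Theory Num.Theory.
Local Open Scope classical_set_scope.
Local Open Scope ring_scope.

Section Constr.
Variables (R : realType) (n : nat) (x : lstrategy R n).
Hypothesis Hx : is_lstrategy x.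

Definition j0 : Bidx n := ord_max.
Definition yop : ostrategy R n := fun _ j => (j == j0)%:R.

Lemma yop_ok : is_ostrategy yop.
Proof.
move=> h; split=> [j|]; first by rewrite /yop ler0n.
rewrite (bigD1 j0) //= big1 ?addr0 /yop ?eqxx //.
by move=> j /negbTE ->.
Qed.

Definition Fc (h : history n) (k : nat) : R :=
  \sum_(m < n.+2 | (m < k)%N) x h m.

Lemma Fc0 h : Fc h 0 = 0.
Proof. by rewrite /Fc big_pred0. Qed.

Lemma FcN h : Fc h n.+2 = 1.
Proof.
have [_ <-] := Hx h; rewrite /Fc; apply: eq_bigl => m; exact: ltn_ord.
Qed.

Lemma FcS h (i : 'I_n.+2) : Fc h i.+1 = Fc h i + x h i.
Proof.
rewrite /Fc (bigD1 i) ?ltnSn //= addrC; congr (_ + _).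
apply: eq_bigl => m; rewrite ltnS ltn_neqAle -val_eqE /=.
by rewrite andbC.
Qed.

Lemma Fc_mono h k k' : (k <= k')%N -> Fc h k <= Fc h k'.
Proof.
move=> kk; rewrite /Fc !(big_mkcond (fun m : 'I_n.+2 => (m < _)%N)) /=.
apply: ler_sum => m _.
case: ifP => mk; first by rewrite (leq_trans mk kk).
by case: ifP => // _; have [] := Hx h.
Qed.

Lemma Fc_ge0 h k : 0 <= Fc h k.
Proof. by rewrite -(Fc0 h); apply: Fc_mono. Qed.

Lemma x_ge0 h i : 0 <= x h i.
Proof. by have [] := Hx h. Qed.

Fixpoint lp (r : seq ('I_n.+2 * 'I_n.+1)) : R * R :=
  match r with
  | [::] => (0, 1)
  | e :: r' => let q := lp r' in
       (q.1 + q.2 * Fc (rev r') e.1, q.2 * (x (rev r') e.1 * yop (rev r') e.2))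
  end.
Definition Lh (h : history n) := (lp (rev h)).1.
Definition Ph (h : history n) := (lp (rev h)).2.

Lemma Lh_rcons h e : Lh (rcons h e) = Lh h + Ph h * Fc h e.1.
Proof. by rewrite /Lh /Ph rev_rcons /= revK. Qed.
Lemma Ph_rcons h e : Ph (rcons h e) = Ph h * (x h e.1 * yop h e.2).
Proof. by rewrite /Lh /Ph rev_rcons /= revK. Qed.
Lemma Lh_nil : Lh [::] = 0. Proof. by []. Qed.
Lemma Ph_nil : Ph [::] = 1. Proof. by []. Qed.

Lemma bounds hh : [/\ 0 <= Ph hh, 0 <= Lh hh & Lh hh + Ph hh <= 1].
Proof.
elim/last_ind: hh => [|h e [P0 L0 LP1]].
  by rewrite Lh_nil Ph_nil add0r; split.
rewrite Lh_rcons Ph_rcons.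
have y01 : 0 <= yop h e.2 <= 1.
  by rewrite /yop; case: (e.2 == j0) => /=; rewrite ?ler01 ?lexx ?ler0n.
case/andP: y01 => y0 y1.
have xe := x_ge0 h e.1.
have F0 := Fc_ge0 h e.1.
have FS : Fc h e.1 + x h e.1 <= 1.
  by rewrite -FcS -(FcN h); apply: Fc_mono.
have hxy : x h e.1 * yop h e.2 <= x h e.1 by rewrite ler_piMr.
split.
- by apply: mulr_ge0 => //; apply: mulr_ge0.
- by apply: addr_ge0 => //; apply: mulr_ge0.
- apply: (le_trans _ LP1); rewrite -addrA lerD2l -mulrDr.
  rewrite ler_piMr //; apply: le_trans FS; by rewrite lerD2l.
Qed.

Definition cc h (k : nat) := Lh h + Ph h * Fc h k.
Definition inI h (i : nat) (w : R) : bool := (cc h i <= w) && (w < cc h i.+1).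
Definition sel h (w : R) : 'I_n.+2 := odflt ord0 [pick i : 'I_n.+2 | inI h i w].

Lemma cc_mono h k k' : (k <= k')%N -> cc h k <= cc h k'.
Proof.
move=> kk; rewrite /cc lerD2l; apply: ler_wpM2l; first by have [] := bounds h.
exact: Fc_mono.
Qed.

Lemma cc0 h : cc h 0 = Lh h. Proof. by rewrite /cc Fc0 mulr0 addr0. Qed.
Lemma ccN h : cc h n.+2 = Lh h + Ph h. Proof. by rewrite /cc FcN mulr1. Qed.
Lemma ccS h (i : 'I_n.+2) : cc h i.+1 = cc h i + Ph h * x h i.
Proof. by rewrite /cc FcS mulrDr addrA. Qed.

Lemma inI_uniq h (i k : 'I_n.+2) w : inI h i w -> inI h k w -> i = k.
Proof.
move=> /andP[a1 a2] /andP[b1 b2]; apply/val_inj => /=.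
case: (ltngtP i k) => // ik.
  move: (@cc_mono h _ _ ik) => cm; clear ik; exfalso; lra.
move: (@cc_mono h _ _ ik) => cm; clear ik; exfalso; lra.
Qed.

Lemma inI_ex h w : Lh h <= w < Lh h + Ph h -> exists i : 'I_n.+2, inI h i w.
Proof.
move=> /andP[w1 w2].
suff: forall m, (m <= n.+2)%N -> w < cc h m -> exists i : 'I_n.+2, inI h i w.
  by move=> /(_ n.+2 (leqnn _)); apply; rewrite ccN.
elim=> [|m IH] Hm; first by rewrite cc0; lra.
move=> wm; case: (ltP w (cc h m)) => wm'.
  by apply: IH => //; exact: ltnW.
by exists (Ordinal Hm); rewrite /inI wm' wm.
Qed.

Lemma sel_spec h w (i : 'I_n.+2) :
  sel h w = i <-> (inI h i w \/ (i = ord0 /\ forall k : 'I_n.+2, ~~ inI h k w)).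
Proof.
rewrite /sel; case: pickP => [k Hk|H0] /=.
  split=> [<-|[Hi|[-> Hn]]]; first by left.
    exact: inI_uniq Hk Hi.
  by move: (Hn k); rewrite Hk.
split=> [<-|[Hi|[-> _]]] //; first by right; split=> // k; rewrite H0.
by move: (H0 i); rewrite Hi.
Qed.


Fixpoint Hh (t : nat) (w : R) : history n :=
  match t with
  | 0 => [::]
  | t'.+1 => rcons (Hh t' w) (sel (Hh t' w) w, j0)
  end.
Definition aa (t : nat) (w : R) : Aidx n := sel (Hh t w) w.
Definition bb (t : nat) (w : R) : Bidx n := j0.

Lemma size_Hh t w : size (Hh t w) = t.
Proof. by elim: t => //= t IH; rewrite size_rcons IH. Qed.

Lemma hist_Hh t w : hist aa bb t w = Hh t w.
Proof.
elim: t => // t IH.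
have -> : hist aa bb t.+1 w = rcons (hist aa bb t w) (aa t w, bb t w).
  by rewrite /hist -addn1 iotaD map_cat /= cats1.
by rewrite IH.
Qed.

Lemma key t h : size h = t ->
  [set w | Hh t w = h] `&` `[0, 1[%classic = `[Lh h, Lh h + Ph h[%classic.
Proof.
elim: t h => [|t IH] h.
  move/size0nil => ->; rewrite Lh_nil Ph_nil add0r.
  by apply/seteqP; split=> w /=; [case|].
case/lastP: h => [//|h [i j]]; rewrite size_rcons => /eqP; rewrite eqSS => /eqP sh.
have [P0 L0 LP1] := bounds h.
apply/seteqP; split=> w /=.
  move=> [E0 w01]; case: (rcons_inj E0) => Hw Hs Hj; rewrite Hw in Hs.
  have : `[Lh h, Lh h + Ph h[%classic w by rewrite -IH //; split.
  rewrite /= in_itv /= => Hr.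
  move/sel_spec: Hs => [Hin|[_ Hn]]; last first.
    by have [k Hk] := @inI_ex h w Hr; move: (Hn k); rewrite Hk.
  move: Hin; rewrite /inI ccS in_itv /= Lh_rcons Ph_rcons -Hj /yop eqxx mulr1.
  by [].
rewrite in_itv /= Lh_rcons Ph_rcons /yop.
case: (eqVneq j j0) => [->|jn]; last first.
  rewrite /= !mulr0 addr0 => /andP[u v]; exfalso; clear -u v; lra.
rewrite /= mulr1 => Hw.
have Hin : inI h i w by rewrite /inI ccS /cc.
have Hr : Lh h <= w < Lh h + Ph h.
  move: Hin => /andP[a1 a2].
  have := @cc_mono h 0 i (leq0n _); have := @cc_mono h i.+1 n.+2 (ltn_ord i).
  by rewrite cc0 ccN; lra.
have w01 : 0 <= w < 1 by lra.
have : ([set w | Hh t w = h] `&` `[0, 1[%classic) w.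
  by rewrite IH //= in_itv /= Hr.
move=> [/= Hw' _]; split; last by rewrite in_itv /=.
by rewrite Hw'; congr rcons; congr pair; apply/sel_spec; left.
Qed.


Lemma meas_const (P : Prop) : measurable [set _ : R | P].
Proof.
case: (pselect P) => p.
  by have -> : [set _ : R | P] = setT by apply/seteqP; split.
by have -> : [set _ : R | P] = set0 by apply/seteqP; split.
Qed.

Lemma meas_inI h k : measurable [set w : R | inI h k w].
Proof.
have -> : [set w : R | inI h k w] = `[cc h k, cc h k.+1[%classic.
  by apply/seteqP; split=> w /=; rewrite in_itv.
exact: measurable_itv.
Qed.

Lemma meas_sel h (i : 'I_n.+2) : measurable [set w | sel h w = i].
Proof.
have -> : [set w | sel h w = i] = [set w | inI h i w] `|`
   ([set _ | i = ord0] `&` ~` \bigcup_k [set w | (k < n.+2)%N /\ inI h k w]).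
  apply/seteqP; split=> w /=.
    move/sel_spec => [H1|[H2 H3]]; [by left|right; split=> //].
    by move=> [k _ [kn Hk]]; move: (H3 (Ordinal kn)); rewrite Hk.
  move=> [H1|[H2 H3]]; apply/sel_spec; [by left|right; split=> //].
  move=> k; case Hk: (inI h k w) => //; exfalso; apply: H3; exists (nat_of_ord k) => //; split => //.
apply: measurableU; first exact: meas_inI.
apply: measurableI; first exact: meas_const.
apply: measurableC; apply: bigcupT_measurable => k.
apply: measurableI; [exact: meas_const|exact: meas_inI].
Qed.

Lemma meas_Hh t h : measurable [set w | Hh t w = h].
Proof.
elim: t h => [|t IH] h; first exact: (meas_const ([::] = h)).
case/lastP: h => [|h [i j]].
  have -> : [set w | Hh t.+1 w = [::]] = set0.
    by apply/seteqP; split=> w //=; case: (Hh t w).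
  exact: measurable0.
have -> : [set w | Hh t.+1 w = rcons h (i, j)] =
    [set w | Hh t w = h] `&` [set w | sel h w = i] `&` [set _ | j0 = j].
  apply/seteqP; split=> w /=.
    by move/rcons_inj => [E1 E2 E3]; rewrite -E1 E2 E3.
  by move=> [[-> ->] ->].
apply: measurableI; last exact: meas_const.
apply: measurableI; [exact: IH|exact: meas_sel].
Qed.

Definition Pu := uniform_prob (@ltr01 R).

Lemma Pu_eq (U : set R) : measurable U ->
  Pu U = lebesgue_measure (U `&` `[0, 1[%classic).
Proof.
move=> mU; rewrite /Pu /uniform_prob integral_uniform_pdf.
have mU1 : measurable (U `&` `[0, 1]%classic).
  by apply: measurableI => //; exact: measurable_itv.
transitivity (\int[lebesgue_measure]_(w in U `&` `[0%R, 1%R]%classic) (cst 1%:E w))%E.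
  apply: eq_integral => w; rewrite inE /= in_itv /= => -[_ H01].
  by rewrite /uniform_pdf H01 subr0 invr1.
rewrite integral_cst // mul1e.
rewrite (measureDI lebesgue_measure mU1 (measurable_itv `[0, 1[)).
have -> : U `&` `[0, 1] `&` `[0, 1[ = U `&` `[0, 1[%classic.
  apply/seteqP; split=> w /=; rewrite !in_itv /=; first by case=> [[]].
  by case=> a /andP[b c]; rewrite b c (ltW c).
rewrite [X in (X + _)%E](_ : _ = 0%E) ?add0e //.
apply/eqP; rewrite -measure_le0.
apply: (@le_trans _ _ (lebesgue_measure (`[1, 1]%classic : set R))).
  apply: le_measure; rewrite ?inE.
  - by apply: measurableD => //; exact: measurable_itv.
  - exact: measurable_itv.
  move=> w /= [[_]]; rewrite !in_itv /= => /andP[a b] /negP.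
  by rewrite a /= -leNgt => c; rewrite b c.
by rewrite lebesgue_measure_itv /= ltxx.
Qed.


Lemma Pu_Hh t h : Pu [set w | Hh t w = h] = (if size h == t then Ph h else 0)%:E.
Proof.
rewrite Pu_eq; last exact: meas_Hh.
case: eqP => st.
  rewrite key // lebesgue_measure_itv /=.
  have [P0 _ _] := bounds h.
  case: ifP => [_|]; first by rewrite -EFinD addrC addKr.
  move=> /negbT; rewrite lte_fin ltrDl -leNgt => P1.
  by congr EFin; apply/eqP; rewrite eq_le P1 P0.
rewrite (_ : [set w | Hh t w = h] = set0) ?set0I ?measure0 //.
by apply/seteqP; split=> w //= E; apply: st; rewrite -E size_Hh.
Qed.

Definition Fk t i k : set R :=
  match @unpickle (history n) k with
  | Some h => [set w | Hh t w = h] `&` [set w | sel h w = i]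
  | None => set0 end.

Lemma realizes_ok : realizes Pu x yop aa bb.
Proof.
split; [|split].
- move=> t i.
  have -> : [set w | aa t w = i] = \bigcup_k Fk t i k.
    apply/seteqP; split=> w.
      move=> E; exists (pickle (Hh t w)); first by [].
      by rewrite /Fk pickleK; split.
    move=> [k _]; rewrite /Fk; case: (unpickle k) => // h [E1 E2].
    by rewrite /aa /= E1.
  apply: bigcupT_measurable => k; rewrite /Fk.
  case: (unpickle k) => [h|]; last exact: measurable0.
  by apply: measurableI; [exact: meas_Hh|exact: meas_sel].
- by move=> t j; exact: (meas_const (j0 = j)).
move=> t h i j.
have -> : [set w | hist aa bb t w = h /\ aa t w = i /\ bb t w = j] =
    [set w | Hh t.+1 w = rcons h (i, j)].
  apply/seteqP; split=> w /=; rewrite hist_Hh.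
    by move=> [E1 [<- <-]] /=; rewrite /aa /bb E1.
  by move/rcons_inj => [E1 E2 E3]; rewrite /aa /bb -E2 -E3 E1.
have -> : [set w | hist aa bb t w = h] = [set w | Hh t w = h].
  by apply/seteqP; split=> w /=; rewrite hist_Hh.
transitivity ((if size (rcons h (i,j)) == t.+1 then Ph (rcons h (i,j)) else 0)%:E).
  exact: Pu_Hh.
transitivity ((if size h == t then Ph h else 0)%:E * (x h i * yop h j)%:E)%E; last first.
  by congr (_ * _)%E; symmetry; exact: Pu_Hh.
rewrite size_rcons eqSS Ph_rcons.
by case: eqP => _; rewrite -EFinM // mul0r.
Qed.

End Constr.

Section Dist.
Variables (R : realType) (n : nat) (alpha : R).
Hypothesis Ha : 0 < alpha < 1.

Let N1 : R := (n.+1)%:R.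
Lemma N1_gt0 : 0 < N1. Proof. by rewrite /N1 ltr0n. Qed.

Lemma Bval_max : Bval R (ord_max : 'I_n.+1) = 1.
Proof. by rewrite /Bval /= divff // pnatr_eq0. Qed.

Lemma Aval_max : Aval R (ord_max : 'I_n.+2) = 1.
Proof. by rewrite /Aval /= divff // pnatr_eq0. Qed.

Lemma Aval_eq1 (i : 'I_n.+2) : (1 <= Aval R i) = (i == ord_max).
Proof.
rewrite /Aval ler_pdivlMr ?ltr0n // mul1r ler_nat.
apply/idP/eqP => [H|->] //; apply/val_inj => /=.
by apply/eqP; rewrite eqn_leq H -ltnS ltn_ord.
Qed.

Lemma Aval_lt (i : 'I_n.+2) : i != ord_max -> Aval R i <= 1 - N1^-1.
Proof.
move=> ni.
have il : (i <= n)%N.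
  have := ltn_ord i; rewrite ltnS leq_eqVlt => /orP[/eqP E|] //.
  by case/eqP: ni; apply/val_inj.
rewrite /Aval -/N1.
have -> : 1 - N1^-1 = n%:R / N1.
  have n0 : (n%:R + 1 : R) != 0 by rewrite natr1 pnatr_eq0.
  by rewrite /N1 -natr1; field.
by rewrite ler_pM2r ?invr_gt0 ?N1_gt0 // ler_nat.
Qed.

Definition beta := alpha / N1.

Lemma m_None (i : 'I_n.+2) : mreg alpha i ord_max None = (i == ord_max)%:R.
Proof. by rewrite /mreg Bval_max Aval_eq1. Qed.

Lemma m_Some (i : 'I_n.+2) :
  beta * (1 - (i == ord_max)%:R) <= mreg alpha i ord_max (Some ord_max).
Proof.
rewrite /mreg Bval_max Aval_max /ell lexx subrr mulr0 subr0 Aval_eq1.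
case: eqP => [->|/eqP ni]; first by rewrite Aval_max subrr !mulr0.
rewrite subr0 mulr1 subr0 /beta.
apply: ler_wpM2l; first by case/andP: Ha => /ltW.
have := @Aval_lt i ni; rewrite /N1; move: (n.+1%:R^-1) => z H; lra.
Qed.

Lemma dist_lb (d : measure_display) (T : measurableType d)
  (a : nat -> T -> Aidx n) (b : nat -> T -> Bidx n) :
  (forall t w, b t w = ord_max) ->
  forall N w, beta * (1 - alpha) / 2 <= dist (avg_payoff (mreg alpha) a b N w) (Sreg alpha).
Proof.
move=> Hb N w.
set X := avg_payoff _ _ _ _ _.
have Hg : X None = (N.+1)%:R^-1 * \sum_(t < N.+1) (a t w == ord_max)%:R.
  by rewrite /X /avg_payoff; congr (_ * _); apply: eq_bigr => t _; rewrite Hb m_None.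
have N1p : 0 < (N.+1)%:R :> R by rewrite ltr0n.
have HS : beta * (1 - X None) <= X (Some ord_max).
  rewrite Hg /X /avg_payoff.
  apply: (@le_trans _ _ ((N.+1)%:R^-1 * \sum_(t < N.+1) (beta * (1 - (a t w == ord_max)%:R)))).
    rewrite -mulr_sumr sumrB sumr_const card_ord.
    rewrite le_eqVlt; apply/orP; left; apply/eqP.
    field; by rewrite addrC natr1 pnatr_eq0.
  apply: ler_wpM2l; first by rewrite invr_ge0 ltW.
  by apply: ler_sum => t _; rewrite Hb; exact: m_Some.
have b0 : 0 < beta by rewrite /beta divr_gt0 ?N1_gt0 //; case/andP: Ha.
have b1 : beta <= alpha.
  rewrite /beta ler_pdivrMr ?N1_gt0 // ler_peMr //; first by case/andP: Ha => /ltW.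
  by rewrite /N1 ler1n.
apply: lb_le_inf.
  exists (eucl_norm (fun k => X k - 0)), (fun _ => 0); split => //.
  by split => //; rewrite lexx /=; case/andP: Ha => /ltW.
move=> r [s [[/andP[_ s1] s2] ->]].
have nrm : forall k, `|X k - s k| <= eucl_norm (fun k => X k - s k).
  move=> k; rewrite /eucl_norm -sqrtr_sqr; apply: ler_wsqrtr.
  rewrite (bigD1 k) //= lerDl; apply: sumr_ge0 => j _; exact: sqr_ge0.
have s2' := s2 ord_max.
case: (lerP (beta * (1 - alpha) / 2) (X None - s None)) => H1.
  by apply: le_trans H1 _; apply: le_trans (nrm None); exact: ler_norm.
apply: le_trans (nrm (Some ord_max)); apply: le_trans (ler_norm _).
case/andP: Ha => a0 a1.
have : beta * (1 - X None) >= beta * (1 - alpha - beta * (1 - alpha) / 2).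
  apply: ler_wpM2l; first exact: ltW.
  lra.
have c0 : 0 <= beta * (1 - alpha) / 2.
  by apply: divr_ge0 => //; apply: mulr_ge0; [exact: ltW|lra].
have bc : beta * (beta * (1 - alpha) / 2) <= beta * (1 - alpha) / 2.
  by rewrite ler_piMl //; lra.
move=> H2.
have ce : 2 * (beta * (1 - alpha) / 2) = beta - beta * alpha by field.
move: H1 H2 bc c0 ce; set c := beta * (1 - alpha) / 2 => H1 H2 bc c0 ce.
lra.
Qed.

End Dist.

Local Close Scope classical_set_scope.

Theorem theorem4 (R : realType) (n : nat) (alpha : R) :
  (0 < n)%N -> 0 < alpha < 1 ->
  ~ approachable (@mreg R n alpha) (@Sreg R n alpha).
Proof.
move=> _ Ha [x [Hx Happ]].
have := Happ (yop R n) (yop_ok R n) _ _ (Pu R) (aa R n x) (bb R n) (realizes_ok R n x Hx).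
move=> Hae.
have PF : ProperFilter (almost_everywhere (Pu R)).
  apply: ae_properfilter_algebraOfSetsType.
  rewrite [X in (0 < X)%E](_ : _ = 1%:E) ?lte01 //; exact: probability_setT.
have [w Hw] := filter_ex Hae.
have b0 : 0 < beta R n alpha * (1 - alpha) / 2.
  case/andP: Ha => a0 a1.
  apply: divr_gt0 => //; apply: mulr_gt0; last by lra.
  by rewrite /beta divr_gt0 // ltr0n.
have := @cvgr_dist_lt _ _ _ _ eventually_filter _ _ Hw _ b0.
move=> /filter_ex [N HN].
have := @dist_lb R n alpha Ha _ _ (aa R n x) (bb R n) (fun _ _ => erefl) N w.
move: HN; rewrite sub0r normrN => HN H.
have := le_trans H (ler_norm _); lra.
Qed.
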